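(* Consider the following multi-cell downlink scheduling model. Time is slotted, $t=1,2,\ldots$. There are $N$ user equipments $\mathrm{UE}_1,\ldots,\mathrm{UE}_N$ and $M$ base stations $\mathrm{BS}_1,\ldots,\mathrm{BS}_M$, each base station covering one cell. At every slot $t$, each $\mathrm{UE}_i$ lies in the cell of exactly one base station, denoted $C_i(t)\in\{1,\ldots,M\}$. Assume i.i.d. uniform mobility: the random variables $C_i(t)$ are independent across users $i$ and slots $t$, each uniformly distributed on $\{1,\ldots,M\}$. At each slot, each $\mathrm{BS}_j$ may attempt a transmission of a fresh packet to at most one UE currently in its cell (i.e. a UE with $C_i(t)=j$). A transmission attempted to $\mathrm{UE}_i$ succeeds with probability $p_i$, independently of everything else; assume statistically identical UEs, $p_i=p\in(0,1]$ for all $i$. The age of information $h_i(t)$ of $\mathrm{UE}_i$ evolves as $h_i(t+1)=1$ if $\mathrm{UE}_i$ was scheduled at slot $t$ and the transmission succeeded, and $h_i(t+1)=h_i(t)+1$ otherwise. For a causal (online) scheduling policy $\pi$, its average AoI is $\mathsf{AoI}^{\pi}=\limsup_{T\to\infty}\frac{1}{NT}\sum_{t=1}^{T}\sum_{i=1}^{N}\mathbb{E}^{\pi}[h_i(t)]$, and $\mathsf{AoI}^*$ denotes the infimum of $\mathsf{AoI}^\pi$ over all such policies. Let $\pi^{\mathsf{MMW}}$ be the policy under which, at every slot $t$, each base station schedules, among the UEs in its cell, one with the largest index $I_i(t)=p_i h_i(t)^2$. Then $\pi^{\mathsf{MMW}}$ is a $2$-approximation, i.e. $\mathsf{AoI}^{\pi^{\mathsf{MMW}}}\le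 2\,\mathsf{AoI}^*$.
   Context: A scheduling policy is causal/online if its decision at each slot depends only on the history of ages, cell occupancies and scheduling decisions observed so far (together with the current cell occupancy). The stationary cell-occupancy distribution in the i.i.d. uniform mobility model is $\psi_{ij}=1/M$ for all $i,j$. A base station whose cell contains no UE makes no transmission. *)

(* Defs.v *)
From HB Require Import structures.
From mathcomp Require Import all_boot all_order all_algebra.
From mathcomp Require Import all_classical all_reals all_analysis.
Set Implicit Arguments. Unset Strict Implicit. Unset Printing Implicit Defensive.
Import Order.TTheory GRing.Theory Num.Theory.
Local Open Scope ring_scope.

Definition cellv (N M : nat) := {ffun 'I_N -> 'I_M}.
(* A decision d j = Some i only has an effect if UE i is in cell j,
   i.e. UE i is scheduled at the slot iff d (c i) = Some i. *)
Definition decv (N M : nat) := {ffun 'I_M -> option 'I_N}.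
Definition agev (N : nat) := {ffun 'I_N -> nat}.
Definition hist (N M : nat) := seq (cellv N M * decv N M * agev N).

(* A (possibly randomized) causal policy: given the history, the current ages
   and the current cell occupancy, a probability weight on decisions. *)
Definition policy (R : realType) (N M : nat) :=
  hist N M -> agev N -> cellv N M -> decv N M -> R.

Definition is_policy (R : realType) (N M : nat) (pi : policy R N M) : Prop :=
  forall (H : hist N M) (a : agev N) (c : cellv N M),
    (forall d, 0 <= pi H a c d) /\ \sum_(d : decv N M) pi H a c d = 1.

Definition scheduled (N M : nat) (c : cellv N M) (d : decv N M) (i : 'I_N) : bool :=
  d (c i) == Some i.

Definition next_ages (N M : nat) (a : agev N) (c : cellv N M) (d : decv N M)
  (s : {ffun 'I_N -> bool}) : agev N :=
  [ffun i => if scheduled c d i && s i then 1%N else (a i).+1].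

Definition succ_weight (R : realType) (N : nat) (p : R) (s : {ffun 'I_N -> bool}) : R :=
  \prod_(i < N) (if s i then p else 1 - p).

(* Expectation of f(history, ages) after n further slots, starting from the
   history H and current ages a, under policy pi, with i.i.d. uniform mobility
   (each occupancy vector has probability 1/M^N) and success probability p. *)
Fixpoint expect_from (R : realType) (N M : nat) (p : R) (pi : policy R N M)
  (n : nat) (H : hist N M) (a : agev N) (f : hist N M -> agev N -> R) : R :=
  match n with
  | 0%N => f H a
  | n'.+1 =>
      \sum_(c : cellv N M) ((M ^ N)%:R)^-1 *
        \sum_(d : decv N M) pi H a c d *
          \sum_(s : {ffun 'I_N -> bool}) succ_weight p s *
            expect_from p pi n' (rcons H (c, d, a)) (next_ages a c d s) f
  end.

(* E^pi[h_i(t)], with h(1) = h0 the initial ages. *)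
Definition exp_age (R : realType) (N M : nat) (p : R) (pi : policy R N M)
  (h0 : agev N) (i : 'I_N) (t : nat) : R :=
  expect_from p pi t.-1 [::] h0 (fun _ a => (a i)%:R).

Definition avg_AoI (R : realType) (N M : nat) (p : R) (pi : policy R N M)
  (h0 : agev N) : \bar R :=
  limn_esup (fun T : nat =>
    ((N * T)%:R^-1 * \sum_(1 <= t < T.+1) \sum_(i < N) exp_age p pi h0 i t)%:E).

Definition opt_AoI (R : realType) (N M : nat) (p : R) (h0 : agev N) : \bar R :=
  ereal_inf [set avg_AoI p pi h0 | pi in [set pi : policy R N M | is_policy pi]].

(* pi is a Max-Weight (MMW) policy: with probability one, every BS whose cell
   is nonempty schedules a UE of its cell with largest index p * h_i^2
   (any tie-breaking, possibly randomized, is allowed). *)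
Definition is_MMW (R : realType) (N M : nat) (p : R) (pi : policy R N M) : Prop :=
  forall (H : hist N M) (a : agev N) (c : cellv N M) (d : decv N M),
    pi H a c d != 0 ->
    forall j : 'I_M, (exists k, c k = j) ->
      exists i : 'I_N, [/\ d j = Some i, c i = j &
        forall k : 'I_N, c k = j -> p * ((a k)%:R ^+ 2) <= p * ((a i)%:R ^+ 2)].

(* Main.v *)
Require Import Defs.
From HB Require Import structures.
From mathcomp Require Import all_boot all_order all_algebra.
From mathcomp Require Import all_classical all_reals all_analysis.
From mathcomp Require Import ring lra.
Import Order.TTheory GRing.Theory Num.Theory.
Local Open Scope ring_scope.
Set Implicit Arguments. Unset Strict Implicit. Unset Printing Implicit Defensive.

Lemma sum_lin (R : realType) (I : finType) (al f g : I -> R) k :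
  \sum_x al x * (k * f x + g x) = k * \sum_x al x * f x + \sum_x al x * g x.
Proof. rewrite mulr_sumr -big_split; apply: eq_bigr => x _ /=; ring. Qed.

Lemma sum_one (R : realType) (I : finType) (al : I -> R) k :
  \sum_x al x = 1 -> \sum_x al x * k = k.
Proof. by rewrite -mulr_suml => ->; rewrite mul1r. Qed.

Lemma sum_mono (R : realType) (I : finType) (al f g : I -> R) :
  (forall x, 0 <= al x) -> (forall x, f x <= g x) ->
  \sum_x al x * f x <= \sum_x al x * g x.
Proof. by move=> h1 h2; apply: ler_sum => x _; apply: ler_wpM2l. Qed.

Lemma sum_ge0' (R : realType) (I : finType) (al f : I -> R) :
  (forall x, 0 <= al x) -> (forall x, 0 <= f x) -> 0 <= \sum_x al x * f x.
Proof. by move=> h1 h2; apply: sumr_ge0 => x _; apply: mulr_ge0. Qed.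

Lemma ef_lin (R : realType) (N M : nat) (p : R) (pi : policy R N M) n H a f g k :
  expect_from p pi n H a (fun H a => k * f H a + g H a) =
  k * expect_from p pi n H a f + expect_from p pi n H a g.
Proof.
elim: n H a => [//|n IH] H a /=.
under eq_bigr => c _ do under eq_bigr => d _ do under eq_bigr => s _ do rewrite IH.
under eq_bigr => c _ do under eq_bigr => d _ do rewrite sum_lin.
under eq_bigr => c _ do rewrite sum_lin.
by rewrite sum_lin.
Qed.

Lemma ef_add (R : realType) (N M : nat) (p : R) (pi : policy R N M) n H a f g :
  expect_from p pi n H a (fun H a => f H a + g H a) =
  expect_from p pi n H a f + expect_from p pi n H a g.
Proof.
transitivity (expect_from p pi n H a (fun H a => 1 * f H a + g H a)).
  by congr expect_from; apply/funext => ?; apply/funext => ?; rewrite mul1r.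
by rewrite ef_lin mul1r.
Qed.

Lemma ef_ext (R : realType) (N M : nat) (p : R) (pi : policy R N M) n H a f g :
  (forall H a, f H a = g H a) ->
  expect_from p pi n H a f = expect_from p pi n H a g.
Proof. by move=> e; congr expect_from; apply/funext => ?; apply/funext => ?. Qed.

Lemma ef_S (R : realType) (N M : nat) (p : R) (pi : policy R N M) n H a f :
  expect_from p pi n.+1 H a f =
      \sum_(c : cellv N M) ((M ^ N)%:R)^-1 *
        \sum_(d : decv N M) pi H a c d *
          \sum_(s : {ffun 'I_N -> bool}) succ_weight p s *
            expect_from p pi n (rcons H (c, d, a)) (next_ages a c d s) f.
Proof. by []. Qed.

Lemma ef_tower (R : realType) (N M : nat) (p : R) (pi : policy R N M) n H a f :
  expect_from p pi n.+1 H a f =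
  expect_from p pi n H a (fun H' a' => expect_from p pi 1 H' a' f).
Proof.
elim: n H a => [//|n IH] H a.
rewrite [LHS]ef_S [RHS]ef_S.
by under eq_bigr => c _ do under eq_bigr => d _ do under eq_bigr => s _ do rewrite IH.
Qed.

Definition good (R : realType) (N M : nat) (p : R) (pi : policy R N M) :=
  [/\ \sum_(c : cellv N M) ((M ^ N)%:R)^-1 = 1 :> R,
      0 <= ((M ^ N)%:R)^-1 :> R,
      is_policy pi,
      \sum_(s : {ffun 'I_N -> bool}) succ_weight p s = 1 &
      forall s : {ffun 'I_N -> bool}, 0 <= succ_weight p s].

Lemma ef_const (R : realType) (N M : nat) (p : R) (pi : policy R N M) n H a k :
  good p pi -> expect_from p pi n H a (fun _ _ => k) = k.
Proof.
case=> w1 _ hpi s1 _.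
elim: n H a => [//|n IH] H a /=.
under eq_bigr => c _ do under eq_bigr => d _ do under eq_bigr => s _ do rewrite IH.
under eq_bigr => c _ do under eq_bigr => d _ do rewrite (sum_one _ s1).
under eq_bigr => c _ do rewrite (sum_one _ (proj2 (hpi H a c))).
by rewrite sum_one.
Qed.

Lemma ef_mono (R : realType) (N M : nat) (p : R) (pi : policy R N M) n H a f g :
  good p pi -> (forall H a, f H a <= g H a) ->
  expect_from p pi n H a f <= expect_from p pi n H a g.
Proof.
case=> _ w0 hpi _ s0 fg.
elim: n H a => [//|n IH] H a /=.
apply: sum_mono => // c.
apply: sum_mono => [d|d]; first by case: (hpi H a c).
by apply: sum_mono.
Qed.

Lemma ef_sum (R : realType) (N M : nat) (p : R) (pi : policy R N M) n H a
   (J : Type) (r : seq J) (F : J -> hist N M -> agev N -> R) :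
  good p pi ->
  expect_from p pi n H a (fun H a => \sum_(j <- r) F j H a) =
  \sum_(j <- r) expect_from p pi n H a (F j).
Proof.
move=> g; elim: r => [|x r IH].
  rewrite big_nil; transitivity (expect_from p pi n H a (fun _ _ => 0)).
    by apply: ef_ext => ? ?; rewrite big_nil.
  exact: ef_const.
rewrite big_cons -IH -ef_add; apply: ef_ext => ? ?; by rewrite big_cons.
Qed.

Lemma sum_prod (R : realType) (N : nat) (G : 'I_N -> bool -> R) :
  \sum_(s : {ffun 'I_N -> bool}) \prod_(k < N) G k (s k) =
  \prod_(k < N) (G k true + G k false).
Proof. by rewrite -bigA_distr_bigA; apply: eq_bigr => k _; rewrite big_bool. Qed.

Lemma sw_marg (R : realType) (N : nat) (p : R) (i : 'I_N) (F : bool -> R) :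
  \sum_(s : {ffun 'I_N -> bool}) succ_weight p s * F (s i) =
  p * F true + (1 - p) * F false.
Proof.
pose G k b := (if b then p else 1 - p) * (if k == i then F b else 1).
transitivity (\sum_(s : {ffun 'I_N -> bool}) \prod_(k < N) G k (s k)).
  apply: eq_bigr => s _; rewrite /G /succ_weight big_split /=; congr (_ * _).
  by rewrite (bigD1 i) //= eqxx big1 ?mulr1 // => k /negbTE ->.
rewrite sum_prod (bigD1 i) //= big1 ?mulr1 /G ?eqxx //.
by move=> k /negbTE ->; rewrite !mulr1 addrC subrK.
Qed.

Lemma sw_sum1 (R : realType) (N : nat) (p : R) :
  \sum_(s : {ffun 'I_N -> bool}) succ_weight p s = 1.
Proof.
rewrite /succ_weight (sum_prod (fun k b => if b then p else 1 - p)).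
by rewrite big1 // => k _; rewrite addrC subrK.
Qed.

Lemma good_ok (R : realType) (N M : nat) (p : R) (pi : policy R N M) :
  (0 < M)%N -> 0 <= p -> p <= 1 -> is_policy pi -> good p pi.
Proof.
move=> M0 p0 p1 hpi; split.
- rewrite sumr_const card_ffun !card_ord -[LHS]mulr_natr mulVf //.
  by rewrite pnatr_eq0 expn_eq0 eqn0Ngt M0.
- by rewrite Num.Theory.invr_ge0 ler0n.
- exact: hpi.
- exact: sw_sum1.
- move=> s; apply: prodr_ge0 => k _; case: (s k) => //; by rewrite subr_ge0.
Qed.

Definition sig (R : realType) (N M : nat) (pi : policy R N M) H a (i : 'I_N) : R :=
  \sum_(c : cellv N M) ((M ^ N)%:R)^-1 *
     \sum_(d : decv N M) pi H a c d * (scheduled c d i)%:R.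

Lemma sig_ge0 (R : realType) (N M : nat) (p : R) (pi : policy R N M) H a i :
  good p pi -> 0 <= sig pi H a i.
Proof.
case=> _ w0 hpi _ _; apply: sum_ge0' => // c.
by apply: sum_ge0' => d; [case: (hpi H a c)|].
Qed.

Lemma drift (R : realType) (N M : nat) (p : R) (pi : policy R N M) (phi : R -> R) i H a :
  good p pi ->
  expect_from p pi 1 H a (fun _ a' => phi (a' i)%:R) =
  p * (phi 1 - phi ((a i)%:R + 1)) * sig pi H a i + phi ((a i)%:R + 1).
Proof.
case=> w1 _ hpi _ _; rewrite ef_S /sig.
have E c d : \sum_(s : {ffun 'I_N -> bool}) succ_weight p s *
     expect_from p pi 0 (rcons H (c, d, a)) (next_ages a c d s)
       (fun _ a' => phi (a' i)%:R) =
   p * (phi 1 - phi ((a i)%:R + 1)) * (scheduled c d i)%:R + phi ((a i)%:R + 1).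
  pose F b := phi (if scheduled c d i && b then 1%N else (a i).+1)%:R.
  rewrite /= (eq_bigr (fun s => succ_weight p s * F (s i))); last first.
    by move=> s _; rewrite ffunE.
  rewrite sw_marg /F /=; case: (scheduled c d i); rewrite /= -[((a i).+1)%:R]natr1 ?mulr1n; ring.
under eq_bigr => c _ do under eq_bigr => d _ do rewrite E.
under eq_bigr => c _ do rewrite sum_lin (sum_one _ (proj2 (hpi H a c))).
by rewrite sum_lin sum_one.
Qed.

Definition ncell (R : realType) (N M : nat) (c : cellv N M) (j : 'I_M) : R :=
  \sum_(l < N) ((c l == j)%:R).

Definition gam (R : realType) (N M : nat) (i : 'I_N) : R :=
  \sum_(c : cellv N M) ((M ^ N)%:R)^-1 * (@ncell R N M c (c i))^-1.

Definition swp (N : nat) (i k l : 'I_N) : 'I_N :=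
  if l == i then k else if l == k then i else l.

Lemma swpK (N : nat) (i k : 'I_N) : involutive (swp i k).
Proof.
move=> l; rewrite /swp.
have [->|li] := eqVneq l i; first by rewrite eqxx; case: eqVneq.
have [->|lk] := eqVneq l k; first by rewrite eqxx.
by rewrite (negbTE li) (negbTE lk).
Qed.

Lemma swpL (N : nat) (i k : 'I_N) : swp i k i = k.
Proof. by rewrite /swp eqxx. Qed.

Lemma gam_sym (R : realType) (N M : nat) (i k : 'I_N) :
  @gam R N M i = @gam R N M k.
Proof.
rewrite /gam (reindex_inj (h := fun c : cellv N M => [ffun l => c (swp i k l)])).
  apply: eq_bigr => c _; rewrite ffunE swpL; congr (_ / _).
  rewrite /ncell [RHS](reindex_inj (can_inj (swpK i k))).
  by apply: eq_bigr => l _; rewrite ffunE.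
apply: (can_inj (g := fun c : cellv N M => [ffun l => c (swp i k l)])) => c.
by apply/ffunP => l; rewrite !ffunE swpK.
Qed.

Lemma b_le1 (R : realType) (b : bool) : (b%:R : R) <= 1.
Proof. by case: b; rewrite /= ?mulr1n ?mulr0n ?ler01 ?lexx. Qed.

Lemma b_ge0 (R : realType) (b : bool) : 0 <= (b%:R : R).
Proof. by rewrite ler0n. Qed.

Lemma ncell_part (R : realType) (N M : nat) (c : cellv N M) j :
  ncell R c j = \sum_(i | c i == j) 1.
Proof. by rewrite /ncell [RHS]big_mkcond /=; apply: eq_bigr => i _; case: eqP. Qed.

Lemma part (R : realType) (N M : nat) (c : cellv N M) (F : 'I_N -> R) :
  \sum_i F i = \sum_(j : 'I_M) \sum_(i | c i == j) F i.
Proof. by rewrite (partition_big (fun i => c i) xpredT). Qed.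

Lemma sched_cnt (R : realType) (N M : nat) (c : cellv N M) (d : decv N M) :
  \sum_i ((scheduled c d i)%:R : R) <= \sum_i (ncell R c (c i))^-1.
Proof.
rewrite (part c) [X in _ <= X](part c); apply: ler_sum => j _.
rewrite (eq_bigr (fun i => ((d j == Some i)%:R))); last by move=> i /eqP ci; rewrite /scheduled ci.
rewrite [X in _ <= X](eq_bigr (fun i => 1 * (ncell R c j)^-1)); last by move=> i /eqP ->; rewrite mul1r.
rewrite -mulr_suml -ncell_part.
have L1 : \sum_(i | c i == j) ((d j == Some i)%:R : R) <= ncell R c j.
  by rewrite ncell_part; apply: ler_sum => i _; apply: b_le1.
have L2 : \sum_(i | c i == j) ((d j == Some i)%:R : R) <= 1.
  apply: (@le_trans _ _ (\sum_i ((d j == Some i)%:R : R))).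
    rewrite [X in X <= _]big_mkcond /=; apply: ler_sum => i _.
    by case: (c i == j) => //; apply: b_ge0.
  case: (d j) => [i0|]; last by rewrite big1.
  rewrite (bigD1 i0) //= eqxx big1 ?addr0 ?lexx // => k /negbTE.
  by rewrite eq_sym => h; rewrite (_ : (Some i0 == Some k) = false) //= -h.
have [n0|n0] := eqVneq (ncell R c j) 0; first by rewrite n0 mul0r; rewrite n0 in L1.
by rewrite mulfV.
Qed.

Lemma sched_max (R : realType) (N M : nat) (p : R) (a : agev N) (c : cellv N M)
  (d : decv N M) : 0 < p ->
  (forall j : 'I_M, (exists k, c k = j) ->
      exists i : 'I_N, [/\ d j = Some i, c i = j &
        forall k : 'I_N, c k = j -> p * ((a k)%:R ^+ 2) <= p * ((a i)%:R ^+ 2)]) ->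
  \sum_i (a i)%:R * (ncell R c (c i))^-1 <= \sum_i ((scheduled c d i)%:R : R) * (a i)%:R.
Proof.
move=> p0 HM.
rewrite (part c) [X in _ <= X](part c); apply: ler_sum => j _.
case: (boolP [exists k, c k == j]) => [/existsP [k /eqP ck]| none]; last first.
  have nc i : c i != j.
    by apply: contraNneq none => ci; apply/existsP; exists i; rewrite ci.
  by rewrite !big1 // => i; rewrite (negbTE (nc i)).
have [i0 [dj ci0 mx]] := HM j (ex_intro _ k ck).
rewrite [X in _ <= X](bigD1 i0) ?ci0 ?eqxx //= /scheduled ci0 dj eqxx mul1r.
rewrite [X in _ <= _ + X]big1 ?addr0; last first.
  move=> i /andP [/eqP ci ni]; rewrite ci dj.
  rewrite (_ : (Some i0 == Some i) = false) ?mul0r //.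
  by apply/negbTE; apply: contra ni => /eqP [->].
have npos : 0 < ncell R c j.
  apply: (lt_le_trans ltr01); rewrite ncell_part (bigD1 k) ?ck ?eqxx //=.
  by rewrite lerDl sumr_ge0 // => *; apply: ler01.
apply: (@le_trans _ _ (\sum_(i | c i == j) 1 * ((a i0)%:R * (ncell R c j)^-1))).
  apply: ler_sum => i /eqP ci; rewrite ci mul1r; apply: ler_wpM2r.
    by rewrite Num.Theory.invr_ge0 ltW.
  have := mx i ci; rewrite ler_pM2l // ler_sqr // nnegrE ler0n //.
rewrite -mulr_suml -ncell_part mulrCA mulfV ?mulr1 //.
by rewrite gt_eqF.
Qed.

Lemma sig_sum (R : realType) (N M : nat) (pi : policy R N M) H a (F : 'I_N -> R) :
  \sum_i sig pi H a i * F i =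
  \sum_(c : cellv N M) ((M ^ N)%:R)^-1 *
     \sum_(d : decv N M) pi H a c d * \sum_i (scheduled c d i)%:R * F i.
Proof.
rewrite /sig.
under eq_bigr => i _ do rewrite mulr_suml.
rewrite exchange_big /=; apply: eq_bigr => c _.
under eq_bigr => i _ do rewrite -mulrA mulr_suml.
rewrite -mulr_sumr exchange_big /=; congr (_ * _); apply: eq_bigr => d _.
by rewrite mulr_sumr; apply: eq_bigr => i _; rewrite mulrA.
Qed.

Lemma sig_cnt (R : realType) (N M : nat) (p : R) (pi : policy R N M) H a (i0 : 'I_N) :
  good p pi -> \sum_i sig pi H a i <= N%:R * @gam R N M i0.
Proof.
move=> g; case: (g) => w1 w0 hpi _ _.
rewrite (eq_bigr (fun i => sig pi H a i * 1)); last by move=> *; rewrite mulr1.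
rewrite sig_sum.
apply: (@le_trans _ _ (\sum_(c : cellv N M) ((M ^ N)%:R)^-1 *
     \sum_(d : decv N M) pi H a c d * \sum_i (ncell R c (c i))^-1)).
  apply: sum_mono => // c; apply: sum_mono => [d|d]; first by case: (hpi H a c).
  under eq_bigr => i _ do rewrite mulr1; exact: sched_cnt.
under eq_bigr => c _ do rewrite (sum_one _ (proj2 (hpi H a c))).
under eq_bigr => c _ do rewrite mulr_sumr.
rewrite exchange_big /= (eq_bigr (fun _ => @gam R N M i0)).
  by rewrite sumr_const card_ord mulr_natl.
by move=> i _; rewrite -(gam_sym R M i i0).
Qed.

Lemma sig_mmw (R : realType) (N M : nat) (p : R) (pi : policy R N M) (H : hist N M) (a : agev N) (i0 : 'I_N) :
  0 < p -> good p pi -> is_MMW p pi ->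
  @gam R N M i0 * \sum_i (a i)%:R <= \sum_i sig pi H a i * (a i)%:R.
Proof.
move=> p0 g hM; case: (g) => w1 w0 hpi _ _.
rewrite sig_sum mulr_sumr.
rewrite (eq_bigr (fun i => (a i)%:R * @gam R N M i)); last first.
  by move=> i _; rewrite (gam_sym R M i0 i) mulrC.
under eq_bigr => i _ do rewrite /gam mulr_sumr.
rewrite exchange_big /=; apply: ler_sum => c _.
rewrite (eq_bigr (fun c' => ((M ^ N)%:R)^-1 * ((a c')%:R * (ncell R c (c c'))^-1))); last first.
  by move=> i _; rewrite mulrCA.
rewrite -mulr_sumr; apply: ler_wpM2l => //.
rewrite -(sum_one (\sum_i (a i)%:R * (ncell R c (c i))^-1) (proj2 (hpi H a c))).
apply: ler_sum => d _.
have [z|nz] := eqVneq (pi H a c d) 0; first by rewrite z !mul0r.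
apply: ler_wpM2l; first by case: (hpi H a c).
exact: (sched_max p0 (hM H a c d nz)).
Qed.

Lemma ub_pt (R : realType) (N M : nat) (p : R) (pi : policy R N M) (H : hist N M) (a : agev N) (i0 : 'I_N) :
  0 < p -> good p pi -> is_MMW p pi ->
  expect_from p pi 1 H a (fun _ a' => \sum_i (a' i)%:R) <=
  (1 - p * @gam R N M i0) * \sum_i (a i)%:R + N%:R.
Proof.
move=> p0 g hM; rewrite ef_sum //.
under eq_bigr => i _ do rewrite (drift (fun x => x)) //.
have h := sig_mmw H a i0 p0 g hM.
set X := \sum_i (a i)%:R in h *; set Y := \sum_i _ * _ in h.
have e : \sum_i (p * (1 - ((a i)%:R + 1)) * sig pi H a i + ((a i)%:R + 1)) =
     X + N%:R - p * Y.
  rewrite (eq_bigr (fun i => (a i)%:R + 1 + (-p) * (sig pi H a i * (a i)%:R))).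
    by rewrite !big_split /= -mulr_sumr sumr_const card_ord mulNr.
  by move=> i _; ring.
rewrite e.
have h2 : p * (@gam R N M i0 * X) <= p * Y by apply: ler_wpM2l => //; apply: ltW.
nra.
Qed.

Lemma lb_pt (R : realType) (N M : nat) (p : R) (pi : policy R N M) (H : hist N M) (a : agev N) (i0 : 'I_N) (lam : R) :
  0 <= p -> good p pi ->
  expect_from p pi 1 H a (fun _ a' => \sum_i ((a' i)%:R ^+ 2 - 2 * (lam + 1) * (a' i)%:R)) <=
  \sum_i ((a i)%:R ^+ 2 - 2 * (lam + 1) * (a i)%:R) + 2 * \sum_i (a i)%:R
   - N%:R * (2 * lam + 1) + p * lam ^+ 2 * (N%:R * @gam R N M i0).
Proof.
move=> p0 g; rewrite ef_sum //.
under eq_bigr => i _ do rewrite (drift (fun x => x ^+ 2 - 2 * (lam + 1) * x)) //.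
apply: (@le_trans _ _ (\sum_i (((a i)%:R ^+ 2 - 2 * (lam + 1) * (a i)%:R) + 2 * (a i)%:R
    + (- (2 * lam + 1)) + (p * lam ^+ 2) * sig pi H a i))).
  apply: ler_sum => i _.
  have s0 := sig_ge0 H a i g.
  have h : 0 <= p * sig pi H a i * ((a i)%:R - lam) ^+ 2.
    by apply: mulr_ge0; [apply: mulr_ge0|apply: sqr_ge0].
  set x := (a i)%:R in h *; set s := sig pi H a i in s0 h *.
  rewrite -subr_ge0.
  suff -> : x ^+ 2 - 2 * (lam + 1) * x + 2 * x + - (2 * lam + 1) + p * lam ^+ 2 * s -
    (p * (1 ^+ 2 - 2 * (lam + 1) * 1 - ((x + 1) ^+ 2 - 2 * (lam + 1) * (x + 1))) * s +
     ((x + 1) ^+ 2 - 2 * (lam + 1) * (x + 1))) = p * s * (x - lam) ^+ 2 by [].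
  ring.
rewrite !big_split /= -!mulr_sumr sumr_const card_ord.
have hc := sig_cnt H a i0 g.
have : p * lam ^+ 2 * \sum_i sig pi H a i <= p * lam ^+ 2 * (N%:R * @gam R N M i0).
  by apply: ler_wpM2l => //; apply: mulr_ge0 => //; apply: sqr_ge0.
rewrite -mulr_natl.
set A := \sum_i _; set B := \sum_i _; move=> hh.
lra.
Qed.

Definition Ssum (R : realType) (N M : nat) (p : R) (pi : policy R N M) (h0 : agev N) t :=
  expect_from p pi t [::] h0 (fun _ a => \sum_i (a i)%:R).

Lemma avg_eq (R : realType) (N M : nat) (p : R) (pi : policy R N M) (h0 : agev N) T :
  good p pi ->
  \sum_(1 <= t < T.+1) \sum_i exp_age p pi h0 i t = \sum_(t < T) Ssum p pi h0 t.
Proof.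
move=> g; rewrite big_add1 /= big_mkord; apply: eq_bigr => t _.
by rewrite /Ssum ef_sum.
Qed.

Lemma Ssum_ge0 (R : realType) (N M : nat) (p : R) (pi : policy R N M) (h0 : agev N) t :
  good p pi -> 0 <= Ssum p pi h0 t.
Proof.
move=> g; rewrite -(ef_const t [::] h0 0 g); apply: ef_mono => // H a.
by apply: sumr_ge0 => i _; apply: ler0n.
Qed.

Lemma ub_seq (R : realType) (N M : nat) (p : R) (pi : policy R N M) (h0 : agev N) (i0 : 'I_N) T :
  0 < p -> good p pi -> is_MMW p pi ->
  p * @gam R N M i0 * \sum_(t < T) Ssum p pi h0 t + Ssum p pi h0 T <=
  Ssum p pi h0 0 + N%:R * T%:R.
Proof.
move=> p0 g hM; elim: T => [|T IH].
  by rewrite big_ord0 mulr0 mulr0 add0r addr0.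
rewrite big_ord_recr /=.
have st : Ssum p pi h0 T.+1 <= (1 - p * @gam R N M i0) * Ssum p pi h0 T + N%:R.
  rewrite /Ssum ef_tower.
  apply: (@le_trans _ _ (expect_from p pi T [::] h0
     (fun H a => (1 - p * @gam R N M i0) * \sum_i (a i)%:R + N%:R))).
    by apply: ef_mono => // H a; apply: ub_pt.
  by rewrite ef_lin ef_const.
rewrite -natr1; nra.
Qed.

Definition Vf (R : realType) (N M : nat) (lam : R) (H : hist N M) (a : agev N) : R :=
  \sum_i ((a i)%:R ^+ 2 - 2 * (lam + 1) * (a i)%:R).

Lemma lb_seq (R : realType) (N M : nat) (p : R) (pi : policy R N M) (h0 : agev N) (i0 : 'I_N) (lam : R) T :
  0 <= p -> good p pi ->
  expect_from p pi T [::] h0 (@Vf R N M lam) <=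
  @Vf R N M lam [::] h0 + 2 * \sum_(t < T) Ssum p pi h0 t +
  T%:R * (p * lam ^+ 2 * (N%:R * @gam R N M i0) - N%:R * (2 * lam + 1)).
Proof.
move=> p0 g; set K0 := (_ - _).
elim: T => [|T IH].
  by rewrite big_ord0 mulr0 mul0r !addr0.
rewrite ef_tower.
apply: (@le_trans _ _ (expect_from p pi T [::] h0
     (fun H a => 2 * \sum_i (a i)%:R + (@Vf R N M lam H a + K0)))).
  apply: ef_mono => // H a; apply: (le_trans (lb_pt H a i0 lam p0 g)).
  by rewrite /Vf /K0; lra.
rewrite ef_lin ef_add ef_const // -/(Ssum p pi h0 T) big_ord_recr /= -[(T.+1)%:R]natr1.
move: IH; set W := expect_from _ _ _ _ _ _; set S := \sum_(_ < _) _; nra.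
Qed.

Lemma Vf_lb (R : realType) (N M : nat) (lam : R) (H : hist N M) (a : agev N) :
  - (N%:R * (lam + 1) ^+ 2) <= @Vf R N M lam H a.
Proof.
rewrite /Vf; apply: (@le_trans _ _ (\sum_(i < N) (- (lam + 1) ^+ 2))).
  by rewrite sumr_const card_ord mulNrn mulr_natl.
apply: ler_sum => i _; have := sqr_ge0 ((a i)%:R - (lam + 1)); nra.
Qed.

Lemma small_eventually (R : realType) (K e : R) : 0 <= K -> 0 < e ->
  exists n0 : nat, forall k : nat, (n0 <= k)%N -> K / k%:R <= e.
Proof.
move=> K0 e0; exists (Num.bound (K / e)).+1 => k hk.
have h1 : K / e < (Num.bound (K / e))%:R by apply: archi_boundP; apply: divr_ge0 => //; apply: ltW.
have h2 : (Num.bound (K / e))%:R <= k%:R :> R by rewrite ler_nat; apply: leq_trans hk.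
have kp : 0 < k%:R :> R by rewrite ltr0n; apply: leq_trans hk.
rewrite ler_pdivrMr // mulrC -ler_pdivrMr //; apply: ltW; exact: lt_le_trans h1 h2.
Qed.

Lemma esup_ub (R : realType) (u : nat -> \bar R) (x : R) :
  (forall e, 0 < e -> exists n0, forall k, (n0 <= k)%N -> (u k <= (x + e)%:E)%E) ->
  (limn_esup u <= x%:E)%E.
Proof.
move=> h; rewrite limn_esup_lim; apply/lee_addgt0Pr => e e0.
have [n0 Hn] := h e e0.
apply: lime_le; first exact: is_cvg_esups.
exists n0 => // n /= hn; apply: ge_ereal_sup => _ [k /= nk <-].
rewrite -EFinD; apply: Hn; exact: leq_trans hn nk.
Qed.

Lemma esup_lb (R : realType) (u : nat -> \bar R) (x : R) :
  (forall e, 0 < e -> exists n0, forall k, (n0 <= k)%N -> ((x - e)%:E <= u k)%E) ->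
  (x%:E <= limn_esup u)%E.
Proof.
move=> h; rewrite limn_esup_lim; apply/lee_subgt0Pr => e e0.
have [n0 Hn] := h e e0.
apply: lime_ge; first exact: is_cvg_esups.
apply: nearW => n; apply: (@le_trans _ _ (u (maxn n n0))).
  rewrite -EFinB; apply: Hn; exact: leq_maxr.
by apply: ereal_sup_ubound; exists (maxn n n0) => //=; apply: leq_maxl.
Qed.

Lemma gam_pos (R : realType) (N M : nat) (i0 : 'I_N) :
  (0 < M)%N -> 0 < @gam R N M i0.
Proof.
move=> M0.
have N0 : (0 < N)%N by case: i0 => i hi; apply: leq_trans hi.
have g : good (1 : R) (fun _ _ _ _ => 0 : R) -> True by [].
have w1 : \sum_(c : cellv N M) ((M ^ N)%:R)^-1 = 1 :> R.
  rewrite sumr_const card_ffun !card_ord -[LHS]mulr_natr mulVf //.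
  by rewrite pnatr_eq0 expn_eq0 eqn0Ngt M0.
have Np : 0 < N%:R :> R by rewrite ltr0n.
apply: (@lt_le_trans _ _ (N%:R^-1)); first by rewrite Num.Theory.invr_gt0.
rewrite /gam -(sum_one (N%:R^-1 : R) w1).
apply: ler_sum => c _; apply: ler_wpM2l; first by rewrite Num.Theory.invr_ge0 ler0n.
have np : 0 < ncell R c (c i0).
  apply: (lt_le_trans ltr01); rewrite ncell_part (bigD1 i0) ?eqxx //=.
  by rewrite lerDl sumr_ge0 // => *; apply: ler01.
rewrite lef_pV2 ?posrE //.
apply: (@le_trans _ _ (\sum_(l < N) (1 : R))).
  by rewrite /ncell; apply: ler_sum => l _; apply: b_le1.
by rewrite sumr_const card_ord.
Qed.

Lemma avg_ub (R : realType) (N M : nat) (p : R) (pi : policy R N M) (h0 : agev N) (i0 : 'I_N) :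
  (0 < M)%N -> 0 < p -> good p pi -> is_MMW p pi ->
  (avg_AoI p pi h0 <= ((p * @gam R N M i0)^-1)%:E)%E.
Proof.
move=> M0 p0 g hM.
have N0 : (0 < N)%N by case: i0 => i hi; apply: leq_trans hi.
set q := p * @gam R N M i0.
have q0 : 0 < q by apply: mulr_gt0 => //; apply: gam_pos.
set S0 := Ssum p pi h0 0.
have S00 : 0 <= S0 by apply: Ssum_ge0.
apply: esup_ub => e e0.
have qi : 0 <= q^-1 by rewrite Num.Theory.invr_ge0 ltW.
have [n0 Hn] := small_eventually (K := q^-1 * S0 / N%:R) (e := e)
   (divr_ge0 (mulr_ge0 qi S00) (ler0n _ _)) e0.
exists (maxn 1 n0) => k hk /=; rewrite lee_fin avg_eq //.
have kp : (0 < k)%N by apply: leq_trans hk; apply: leq_maxl.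
have kn : (n0 <= k)%N by apply: leq_trans hk; apply: leq_maxr.
have hU := ub_seq h0 i0 k p0 g hM.
have hS := Ssum_ge0 h0 k g.
rewrite -/q -/S0 in hU.
set Z := \sum_(t < k) _ in hU *.
have hZ : Z <= q^-1 * (S0 + N%:R * k%:R).
  rewrite -(ler_pM2l q0) mulrA mulfV ?mul1r ?gt_eqF //; lra.
apply: (@le_trans _ _ ((N * k)%:R^-1 * (q^-1 * (S0 + N%:R * k%:R)))).
  by apply: ler_wpM2l => //; rewrite Num.Theory.invr_ge0 ler0n.
rewrite (_ : (N * k)%:R^-1 * (q^-1 * (S0 + N%:R * k%:R)) =
    q^-1 + q^-1 * S0 / N%:R / k%:R).
  by rewrite lerD2l; apply: Hn.
rewrite natrM; field.
by rewrite !pnatr_eq0 -!lt0n N0 kp gt_eqF.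
Qed.

Lemma avg_lb (R : realType) (N M : nat) (p : R) (pi : policy R N M) (h0 : agev N) (i0 : 'I_N) :
  (0 < M)%N -> 0 < p -> good p pi ->
  ((((p * @gam R N M i0)^-1 + 1) / 2)%:E <= avg_AoI p pi h0)%E.
Proof.
move=> M0 p0 g.
have N0 : (0 < N)%N by case: i0 => i hi; apply: leq_trans hi.
have gp := @gam_pos R N M i0 M0.
set q := p * @gam R N M i0.
have q0 : 0 < q by apply: mulr_gt0.
set lam := q^-1.
have K0e : p * lam ^+ 2 * (N%:R * @gam R N M i0) = N%:R * lam.
  rewrite /lam /q; field; by rewrite !gt_eqF.
set C := N%:R * (lam + 1) ^+ 2 + @Vf R N M lam [::] h0.
have Np : 0 < N%:R :> R by rewrite ltr0n.
have two : 0 < 2 * N%:R :> R by apply: mulr_gt0 => //; lra.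
apply: esup_lb => e e0.
have [n0 Hn] := small_eventually (K := `|C| / (2 * N%:R)) (e := e)
   (divr_ge0 (normr_ge0 _) (ltW two)) e0.
exists (maxn 1 n0) => k hk /=; rewrite lee_fin avg_eq //.
have kp : (0 < k)%N by apply: leq_trans hk; apply: leq_maxl.
have kn : (n0 <= k)%N by apply: leq_trans hk; apply: leq_maxr.
have hW := lb_seq h0 i0 lam k (ltW p0) g.
have hV : - (N%:R * (lam + 1) ^+ 2) <= expect_from p pi k [::] h0 (@Vf R N M lam).
  rewrite -(ef_const k [::] h0 (- (N%:R * (lam + 1) ^+ 2)) g).
  by apply: ef_mono => // H a; apply: Vf_lb.
rewrite K0e in hW.
set Z := \sum_(t < k) _ in hW *.
have h2Z : k%:R * (N%:R * (lam + 1)) - C <= 2 * Z.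
  rewrite /C; move: hW hV; set W := expect_from _ _ _ _ _ _; set V0 := Vf _ _ _; nra.
have kp' : 0 < k%:R :> R by rewrite ltr0n.
apply: (@le_trans _ _ ((N * k)%:R^-1 * ((k%:R * (N%:R * (lam + 1)) - C) / 2))); last first.
  apply: ler_wpM2l; first by rewrite Num.Theory.invr_ge0 ler0n.
  by rewrite ler_pdivrMr //; lra.
rewrite (_ : (N * k)%:R^-1 * ((k%:R * (N%:R * (lam + 1)) - C) / 2) =
    (lam + 1) / 2 - C / (2 * N%:R) / k%:R); last first.
  by rewrite natrM; field; rewrite !gt_eqF.
rewrite lerD2l lerN2; apply: le_trans (Hn k kn).
apply: ler_wpM2r; first by rewrite Num.Theory.invr_ge0 ltW.
apply: ler_wpM2r; first by rewrite Num.Theory.invr_ge0 ltW // mulr_gt0.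
exact: ler_norm.
Qed.

Unset Implicit Arguments.

Theorem theorem1 (R : realType) (N M : nat) (p : R) (h0 : agev N)
  (pi : policy R N M) :
  (0 < N)%N -> (0 < M)%N -> 0 < p -> p <= 1 ->
  (forall i, (1 <= h0 i)%N) ->
  is_policy pi -> is_MMW p pi ->
  (avg_AoI p pi h0 <= 2%:E * @opt_AoI R N M p h0)%E.
Proof.
move=> N0 M0 p0 p1 _ hpi hM.
have g := good_ok M0 (ltW p0) p1 hpi.
pose i0 := (Ordinal N0 : 'I_N).
apply: (le_trans (avg_ub h0 i0 M0 p0 g hM)).
set L := ((p * @gam R N M i0)^-1 + 1) / 2.
have hopt : (L%:E <= @opt_AoI R N M p h0)%E.
  apply: le_ereal_inf_tmp => _ [pi' hpi' <-].
  exact: (avg_lb h0 i0 M0 p0 (good_ok M0 (ltW p0) p1 hpi')).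
apply: (@le_trans _ _ (2%:E * L%:E)%E).
  by rewrite -EFinM lee_fin /L; lra.
by apply: lee_wpmul2l => //; rewrite lee_fin ler0n.
Qed.
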